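(* Let $\mathcal{A}$ be an $n$-dimensional Hopf algebra over $\mathbb{C}$ (coproduct $\Delta$, counit $\varepsilon$, antipode $S$) with $S^2=\mathrm{id}$, let $\Pi_\phi$ be a representation of $\mathcal{A}$ on $V$ and $|\phi_r\rangle\in V$. Define $\mathcal{T}_r=\{a\in\mathcal{A}:(\mathrm{id}\otimes\Pi_\phi)\Delta(a)(1\otimes|\phi_r\rangle)=a\otimes|\phi_r\rangle\}$, $\mathcal{T}_l=\{a\in\mathcal{A}:(\Pi_\phi\otimes\mathrm{id})\Delta(a)(|\phi_r\rangle\otimes1)=|\phi_r\rangle\otimes a\}$, and let $\mathcal{T}$ be the largest Hopf subalgebra of $\mathcal{A}$ all of whose elements $a$ satisfy $\Pi_\phi(a)|\phi_r\rangle=\varepsilon(a)|\phi_r\rangle$. Then the following are equivalent: (1) $\mathcal{T}_r=\mathcal{T}_l$; (2) $\mathcal{T}_r$ is a Hopf subalgebra of $\mathcal{A}$; (3) $\mathcal{T}_r=\mathcal{T}$; (4) $\mathcal{T}_l\subseteq\mathcal{T}_r$.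
   Context: With $\Delta(a)=\sum a^{(1)}\otimes a^{(2)}$, $(\mathrm{id}\otimes\Pi_\phi)\Delta(a)(1\otimes|\phi_r\rangle)=\sum a^{(1)}\otimes\Pi_\phi(a^{(2)})|\phi_r\rangle\in\mathcal{A}\otimes V$ and $(\Pi_\phi\otimes\mathrm{id})\Delta(a)(|\phi_r\rangle\otimes1)=\sum \Pi_\phi(a^{(1)})|\phi_r\rangle\otimes a^{(2)}\in V\otimes\mathcal{A}$. A Hopf subalgebra is a subalgebra containing $1$, with $\Delta$ mapping it into its tensor square and $S$ mapping it into itself. *)

(* Defs.v *)
(* A finite-dimensional Hopf algebra over C is presented by
   structure constants on the basis e_0,...,e_{n-1} of C^n = 'rV[C]_n, where
   C := R[i] (complex numbers over a realType R, i.e. over the reals). *)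
From HB Require Import structures.
From mathcomp Require Import all_boot all_order all_algebra.
From mathcomp Require Import reals.
From mathcomp Require Import complex.
Set Implicit Arguments. Unset Strict Implicit. Unset Printing Implicit Defensive.
Import Order.TTheory GRing.Theory Num.Theory.
Local Open Scope ring_scope.

Section Hopf.
Variables (K : fieldType) (n : nat).

Definition bvec (i : 'I_n) : 'rV[K]_n := delta_mx 0 i.

(* A (x) A is identified with 'M_(n,n):  a (x) b := a^T *m b,
   so that the (j,k) entry is the coefficient of e_j (x) e_k. *)
Definition tens (a b : 'rV[K]_n) : 'M[K]_(n, n) := a^T *m b.

Record hopf_data := HopfData {
  hmul : 'I_n -> 'I_n -> 'rV[K]_n;
  hunit : 'rV[K]_n;
  hcomul : 'I_n -> 'M[K]_(n, n);
  hcounit : 'I_n -> K;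
  hanti : 'I_n -> 'rV[K]_n
}.

Variable H : hopf_data.

Definition oneA : 'rV[K]_n := hunit H.

Definition mulA (a b : 'rV[K]_n) : 'rV[K]_n :=
  \sum_i \sum_j (a 0 i * b 0 j) *: hmul H i j.
Definition comulA (a : 'rV[K]_n) : 'M[K]_(n, n) := \sum_i a 0 i *: hcomul H i.
Definition counitA (a : 'rV[K]_n) : K := \sum_i a 0 i * hcounit H i.
Definition antiA (a : 'rV[K]_n) : 'rV[K]_n := \sum_i a 0 i *: hanti H i.

(* multiplication of A (x) A : (a (x) b)(c (x) d) = ac (x) bd *)
Definition mul2 (X Y : 'M[K]_(n, n)) : 'M[K]_(n, n) :=
  \sum_i \sum_j \sum_k \sum_l
     (X i j * Y k l) *: tens (mulA (bvec i) (bvec k)) (mulA (bvec j) (bvec l)).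

Definition mS_l (X : 'M[K]_(n, n)) : 'rV[K]_n :=
  \sum_j \sum_k X j k *: mulA (antiA (bvec j)) (bvec k).
Definition mS_r (X : 'M[K]_(n, n)) : 'rV[K]_n :=
  \sum_j \sum_k X j k *: mulA (bvec j) (antiA (bvec k)).

Definition epsl (X : 'M[K]_(n, n)) : 'rV[K]_n :=
  \sum_j \sum_k (hcounit H j * X j k) *: bvec k.
Definition epsr (X : 'M[K]_(n, n)) : 'rV[K]_n :=
  \sum_j \sum_k (X j k * hcounit H k) *: bvec j.

Definition is_hopf : Prop :=
  [/\
      (forall a b c, mulA (mulA a b) c = mulA a (mulA b c)),
      (forall a, mulA oneA a = a /\ mulA a oneA = a) /\
      (* coassociativity, in coordinates on A (x) A (x) A :
         ((Delta (x) id) Delta)(e_i) = ((id (x) Delta) Delta)(e_i) *)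
      (forall i j k l,
         \sum_p hcomul H i p l * hcomul H p j k
         = \sum_p hcomul H i j p * hcomul H p k l),
      (forall a, epsl (comulA a) = a /\ epsr (comulA a) = a),
      [/\ (forall a b, comulA (mulA a b) = mul2 (comulA a) (comulA b)),
          comulA oneA = tens oneA oneA,
          (forall a b, counitA (mulA a b) = counitA a * counitA b) &
          counitA oneA = 1] &
      (forall a, mS_l (comulA a) = counitA a *: oneA /\
                 mS_r (comulA a) = counitA a *: oneA)].

Definition is_rep (V : lmodType K) (Pi : 'rV[K]_n -> V -> V) : Prop :=
  [/\ (forall a (k : K) u v, Pi a (k *: u + v) = k *: Pi a u + Pi a v),
      (forall (k : K) a b v, Pi (k *: a + b) v = k *: Pi a v + Pi b v),
      (forall a b v, Pi (mulA a b) v = Pi a (Pi b v)) &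
      (forall v, Pi oneA v = v)].

(* A (x) V is identified with 'I_n -> V (coefficient of each e_j),
   and likewise V (x) A. *)
Definition T_r (V : lmodType K) (Pi : 'rV[K]_n -> V -> V) (phi : V)
  (a : 'rV[K]_n) : Prop :=
  forall j : 'I_n, \sum_k comulA a j k *: Pi (bvec k) phi = a 0 j *: phi.
Definition T_l (V : lmodType K) (Pi : 'rV[K]_n -> V -> V) (phi : V)
  (a : 'rV[K]_n) : Prop :=
  forall k : 'I_n, \sum_j comulA a j k *: Pi (bvec j) phi = a 0 k *: phi.

Definition subspace (B : 'rV[K]_n -> Prop) : Prop :=
  B 0 /\ (forall (k : K) a b, B a -> B b -> B (k *: a + b)).

Definition in_tensor2 (B : 'rV[K]_n -> Prop) (X : 'M[K]_(n, n)) : Prop :=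
  exists m (us vs : 'I_m -> 'rV[K]_n),
    [/\ (forall i, B (us i)), (forall i, B (vs i)) &
        X = \sum_i tens (us i) (vs i)].

Definition hopf_subalg (B : 'rV[K]_n -> Prop) : Prop :=
  [/\ subspace B, B oneA,
      (forall a b, B a -> B b -> B (mulA a b)),
      (forall a, B a -> in_tensor2 B (comulA a)) &
      (forall a, B a -> B (antiA a))].

Definition fixes (V : lmodType K) (Pi : 'rV[K]_n -> V -> V) (phi : V)
  (a : 'rV[K]_n) : Prop := Pi a phi = counitA a *: phi.

Definition largest_fixing_hopf_subalg (V : lmodType K)
  (Pi : 'rV[K]_n -> V -> V) (phi : V) (T : 'rV[K]_n -> Prop) : Prop :=
  [/\ hopf_subalg T, (forall a, T a -> fixes Pi phi a) &
      (forall B, hopf_subalg B -> (forall a, B a -> fixes Pi phi a) ->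
                 forall a, B a -> T a)].

End Hopf.

(* Main.v *)
Require Import Defs.
From HB Require Import structures.
From mathcomp Require Import all_boot all_order all_algebra.
From mathcomp Require Import reals.
From mathcomp Require Import complex.
From mathcomp Require Import ring.
From Stdlib Require Import Classical.
Import Order.TTheory GRing.Theory Num.Theory.
Local Open Scope ring_scope.
Set Implicit Arguments. Unset Strict Implicit. Unset Printing Implicit Defensive.

Section Lin.
Variables (K : fieldType).

Definition islin (U W : lmodType K) (f : U -> W) :=
  forall k a b, f (k *: a + b) = k *: f a + f b.

Lemma lin0 (U W : lmodType K) (f : U -> W) : islin f -> f 0 = 0.
Proof. move=> hf; have := hf 1 0 0; rewrite scaler0 addr0 scale1r => h.
by apply: (addrI (f 0)); rewrite addr0 -h. Qed.

Lemma linD (U W : lmodType K) (f : U -> W) : islin f -> forall a b, f (a + b) = f a + f b.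
Proof. by move=> hf a b; have := hf 1 a b; rewrite !scale1r. Qed.

Lemma linZ (U W : lmodType K) (f : U -> W) : islin f -> forall k a, f (k *: a) = k *: f a.
Proof. by move=> hf k a; rewrite -[k *: a]addr0 hf (lin0 hf) addr0. Qed.

Lemma linS (U W : lmodType K) (f : U -> W) : islin f -> forall I r (P : pred I) F,
  f (\sum_(i <- r | P i) F i) = \sum_(i <- r | P i) f (F i).
Proof. by move=> hf I r P F; apply: (big_morph f (linD hf) (lin0 hf)). Qed.

Variable n : nat.
Lemma lin_coord (W : lmodType K) (f : 'rV[K]_n -> W) : islin f ->
  forall a, f a = \sum_i a 0 i *: f (bvec K i).
Proof.
move=> hf a; rewrite {1}(row_sum_delta a) (linS hf); apply: eq_bigr => i _.
by rewrite (linZ hf).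
Qed.

Lemma bvecE (i j : 'I_n) : bvec K i 0 j = (i == j)%:R.
Proof. by rewrite /bvec mxE eqxx /= eq_sym. Qed.

Lemma sum_bvec (W : lmodType K) (i : 'I_n) (F : 'I_n -> W) : \sum_j bvec K i 0 j *: F j = F i.
Proof.
rewrite (bigD1 i) //= bvecE eqxx scale1r big1 ?addr0 // => j /negbTE hj.
by rewrite bvecE eq_sym hj scale0r.
Qed.

Lemma sum_bvecM (i : 'I_n) (F : 'I_n -> K) : \sum_j bvec K i 0 j * F j = F i.
Proof.
rewrite (bigD1 i) //= bvecE eqxx mul1r big1 ?addr0 // => j /negbTE hj.
by rewrite bvecE eq_sym hj mul0r.
Qed.

Lemma sum_bvecM' (i : 'I_n) (F : 'I_n -> K) : \sum_j F j * bvec K i 0 j = F i.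
Proof. by rewrite -(sum_bvecM i F); apply: eq_bigr => j _; rewrite mulrC. Qed.

End Lin.
Section Hop.
Variables (K : fieldType) (n : nat) (H : hopf_data K n).
Local Notation e := (@bvec K n).
Local Notation D := (comulA H).
Local Notation S := (antiA H).
Local Notation eps := (counitA H).
Local Notation m := (Defs.mulA H).
Local Notation one := (oneA H).

Lemma islin_ext (U W : lmodType K) (f g : U -> W) :
  (forall x, f x = g x) -> islin g -> islin f.
Proof. by move=> fg hg k a b; rewrite !fg hg. Qed.

Lemma islin_comp (U W Z : lmodType K) (f : U -> W) (g : W -> Z) :
  islin f -> islin g -> islin (fun x => g (f x)).
Proof. by move=> hf hg k a b; rewrite hf hg. Qed.

Lemma coefV_lin (W : lmodType K) (G : 'I_n -> W) :
  islin (fun a : 'rV[K]_n => \sum_i a 0 i *: G i).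
Proof.
move=> k a b; rewrite scaler_sumr -big_split; apply: eq_bigr => i _.
by rewrite !mxE scalerDl scalerA.
Qed.

Lemma coefM_lin (W : lmodType K) (G : 'I_n -> 'I_n -> W) :
  islin (fun X : 'M[K]_(n, n) => \sum_i \sum_j X i j *: G i j).
Proof.
move=> k a b; rewrite scaler_sumr -big_split; apply: eq_bigr => i _.
rewrite scaler_sumr -big_split; apply: eq_bigr => j _.
by rewrite !mxE scalerDl scalerA.
Qed.

Lemma coord_sum (c : 'I_n -> K) p : (\sum_j c j *: e j) 0 p = c p.
Proof.
rewrite summxE; under eq_bigr do rewrite mxE bvecE.
rewrite (bigD1 p) //= eqxx mulr1 big1 ?addr0 // => j /negbTE hj.
by rewrite hj mulr0.
Qed.

Lemma D_lin : islin D.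
Proof. exact: coefV_lin. Qed.
Lemma S_lin : islin S.
Proof. exact: coefV_lin. Qed.
Lemma D_e i : D (e i) = hcomul H i.
Proof. exact: sum_bvec. Qed.
Lemma S_e i : S (e i) = hanti H i.
Proof. exact: sum_bvec. Qed.
Lemma eps_e i : eps (e i) = hcounit H i.
Proof. exact: sum_bvecM. Qed.

Lemma eps_lin k a b : eps (k *: a + b) = k * eps a + eps b.
Proof.
rewrite /counitA mulr_sumr -big_split; apply: eq_bigr => i _.
by rewrite !mxE mulrDl mulrA.
Qed.

Lemma eps_sum I r (P : pred I) F :
  eps (\sum_(i <- r | P i) F i) = \sum_(i <- r | P i) eps (F i).
Proof.
apply: (big_morph eps) => [x y|]; first by have := eps_lin 1 x y; rewrite scale1r mul1r.
by rewrite /counitA big1 // => i _; rewrite mxE mul0r.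
Qed.

Lemma eps_Z k a : eps (k *: a) = k * eps a.
Proof. by rewrite /counitA mulr_sumr; apply: eq_bigr => i _; rewrite mxE mulrA. Qed.

Lemma m_lin_l b : islin (fun a => m a b).
Proof.
apply: (islin_ext _ (coefV_lin (fun i => \sum_j b 0 j *: hmul H i j))) => a.
rewrite /Defs.mulA; apply: eq_bigr => i _; rewrite scaler_sumr; apply: eq_bigr => j _.
by rewrite scalerA.
Qed.

Lemma m_lin_r a : islin (fun b => m a b).
Proof.
apply: (islin_ext _ (coefV_lin (fun j => \sum_i a 0 i *: hmul H i j))) => b.
rewrite /Defs.mulA exchange_big; apply: eq_bigr => j _; rewrite scaler_sumr; apply: eq_bigr => i _.
by rewrite scalerA mulrC.
Qed.

Lemma m_e i j : m (e i) (e j) = hmul H i j.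
Proof.
rewrite /Defs.mulA; under eq_bigr do under eq_bigr do rewrite -scalerA.
under eq_bigr do rewrite -scaler_sumr.
under eq_bigr do rewrite (sum_bvec j (fun k => hmul H _ k)).
exact: (sum_bvec i (fun k => hmul H k j)).
Qed.

Lemma tens_lin_l c : islin (fun a : 'rV[K]_n => tens a c).
Proof. by move=> k a b; rewrite /tens linearP mulmxDl -scalemxAl. Qed.
Lemma tens_lin_r a : islin (fun c : 'rV[K]_n => tens a c).
Proof. by move=> k b c; rewrite /tens mulmxDr scalemxAr. Qed.

Lemma tensE (a b : 'rV[K]_n) j k : tens a b j k = a 0 j * b 0 k.
Proof. by rewrite /tens mxE big_ord1 mxE. Qed.

Lemma tens_e i j : tens (e i) (e j) = delta_mx i j.
Proof. by rewrite /tens /bvec trmx_delta mul_delta_mx. Qed.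

Lemma mat_decomp (X : 'M[K]_(n, n)) :
  X = \sum_i \sum_j X i j *: tens (e i) (e j).
Proof.
rewrite {1}(matrix_sum_delta X); apply: eq_bigr => i _; apply: eq_bigr => j _.
by rewrite tens_e.
Qed.

Lemma lin_eqM (W : lmodType K) (f g : 'M[K]_(n, n) -> W) :
  islin f -> islin g -> (forall a b, f (tens a b) = g (tens a b)) ->
  forall X, f X = g X.
Proof.
move=> hf hg fg X; rewrite (mat_decomp X) (linS hf) (linS hg).
apply: eq_bigr => i _; rewrite (linS hf) (linS hg); apply: eq_bigr => j _.
by rewrite (linZ hf) (linZ hg) fg.
Qed.

Definition T4 i j k l := tens (m (e i) (e k)) (m (e j) (e l)).

Lemma mul2_lin_l Y : islin (fun X => mul2 H X Y).
Proof.
apply: (islin_ext _ (coefM_lin (fun i j => \sum_k \sum_l Y k l *: T4 i j k l))) => X.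
rewrite /mul2; apply: eq_bigr => i _; apply: eq_bigr => j _; rewrite scaler_sumr.
apply: eq_bigr => k _; rewrite scaler_sumr; apply: eq_bigr => l _.
by rewrite scalerA.
Qed.

Lemma mul2_lin_r X : islin (fun Y => mul2 H X Y).
Proof.
apply: (islin_ext _ (coefM_lin (fun k l => \sum_i \sum_j X i j *: T4 i j k l))) => Y.
rewrite /mul2; under eq_bigr do rewrite exchange_big.
rewrite exchange_big; apply: eq_bigr => k _.
under eq_bigr do rewrite exchange_big.
rewrite exchange_big; apply: eq_bigr => l _.
rewrite scaler_sumr; apply: eq_bigr => i _; rewrite scaler_sumr; apply: eq_bigr => j _.
by rewrite scalerA mulrC.
Qed.

End Hop.
Section Hop2.
Variables (K : fieldType) (n : nat) (H : hopf_data K n).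
Implicit Types (a b c d : 'rV[K]_n) (X Y : 'M[K]_(n, n)).
Local Notation e := (@bvec K n).
Local Notation D := (comulA H).
Local Notation S := (antiA H).
Local Notation eps := (counitA H).
Local Notation m := (Defs.mulA H).
Local Notation one := (oneA H).
Local Notation mul2 := (mul2 H).

Lemma tens_suml I r (P : pred I) (F : I -> _) c :
  tens (\sum_(i <- r | P i) F i) c = \sum_(i <- r | P i) tens (F i) c.
Proof. exact: (linS (tens_lin_l c)). Qed.
Lemma tens_sumr I r (P : pred I) (F : I -> _) (c : 'rV[K]_n) :
  tens c (\sum_(i <- r | P i) F i) = \sum_(i <- r | P i) tens c (F i).
Proof. exact: (linS (tens_lin_r c)). Qed.
Lemma tens_Zl k (a c : 'rV[K]_n) : tens (k *: a) c = k *: tens a c.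
Proof. exact: (linZ (tens_lin_l c)). Qed.
Lemma tens_Zr k (a c : 'rV[K]_n) : tens c (k *: a) = k *: tens c a.
Proof. exact: (linZ (tens_lin_r c)). Qed.
Lemma mul2_suml I r (P : pred I) (F : I -> _) Y :
  mul2 (\sum_(i <- r | P i) F i) Y = \sum_(i <- r | P i) mul2 (F i) Y.
Proof. exact: (linS (mul2_lin_l H Y)). Qed.
Lemma mul2_sumr I r (P : pred I) (F : I -> _) X :
  mul2 X (\sum_(i <- r | P i) F i) = \sum_(i <- r | P i) mul2 X (F i).
Proof. exact: (linS (mul2_lin_r H X)). Qed.
Lemma mul2_Zl k X Y : mul2 (k *: X) Y = k *: mul2 X Y.
Proof. exact: (linZ (mul2_lin_l H Y)). Qed.
Lemma mul2_Zr k X Y : mul2 X (k *: Y) = k *: mul2 X Y.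
Proof. exact: (linZ (mul2_lin_r H X)). Qed.
Lemma m_suml I r (P : pred I) (F : I -> _) b :
  m (\sum_(i <- r | P i) F i) b = \sum_(i <- r | P i) m (F i) b.
Proof. exact: (linS (m_lin_l H b)). Qed.
Lemma m_sumr I r (P : pred I) (F : I -> _) a :
  m a (\sum_(i <- r | P i) F i) = \sum_(i <- r | P i) m a (F i).
Proof. exact: (linS (m_lin_r H a)). Qed.
Lemma m_Zl k a b : m (k *: a) b = k *: m a b.
Proof. exact: (linZ (m_lin_l H b)). Qed.
Lemma m_Zr k a b : m a (k *: b) = k *: m a b.
Proof. exact: (linZ (m_lin_r H a)). Qed.
Lemma D_sum I r (P : pred I) (F : I -> _) :
  D (\sum_(i <- r | P i) F i) = \sum_(i <- r | P i) D (F i).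
Proof. exact: (linS (D_lin H)). Qed.
Lemma D_Z k a : D (k *: a) = k *: D a.
Proof. exact: (linZ (D_lin H)). Qed.
Lemma S_sum I r (P : pred I) (F : I -> _) :
  S (\sum_(i <- r | P i) F i) = \sum_(i <- r | P i) S (F i).
Proof. exact: (linS (S_lin H)). Qed.
Lemma S_Z k a : S (k *: a) = k *: S a.
Proof. exact: (linZ (S_lin H)). Qed.

Lemma m_coord a b : m a b = \sum_i \sum_j (a 0 i * b 0 j) *: m (e i) (e j).
Proof. by under [RHS]eq_bigr do under eq_bigr do rewrite m_e. Qed.

Lemma M1 a b c d : mul2 (tens a b) (tens c d) = tens (m a c) (m b d).
Proof.
rewrite (m_coord a c) (m_coord b d) /Defs.mul2.
rewrite tens_suml; apply: eq_bigr => i _.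
rewrite exchange_big.
rewrite tens_suml; apply: eq_bigr => k _.
rewrite tens_Zl tens_sumr scaler_sumr; apply: eq_bigr => j _.
rewrite tens_sumr scaler_sumr; apply: eq_bigr => l _.
by rewrite tens_Zr scalerA !tensE mulrACA.
Qed.

End Hop2.
Section Hop3.
Variables (K : fieldType) (n : nat) (H : hopf_data K n).
Implicit Types (a b c d x y : 'rV[K]_n) (X Y Z : 'M[K]_(n, n)).
Local Notation e := (@bvec K n).
Local Notation D := (comulA H).
Local Notation S := (antiA H).
Local Notation eps := (counitA H).
Local Notation m := (Defs.mulA H).
Local Notation one := (oneA H).
Local Notation mul2 := (mul2 H).
Hypothesis hH : is_hopf H.

Lemma massoc a b c : m (m a b) c = m a (m b c).
Proof. by case: hH. Qed.
Lemma m1a a : m one a = a.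
Proof. by case: hH => _ [/(_ a) []]. Qed.
Lemma ma1 a : m a one = a.
Proof. by case: hH => _ [/(_ a) []]. Qed.
Lemma coass i j k l : \sum_p hcomul H i p l * hcomul H p j k
         = \sum_p hcomul H i j p * hcomul H p k l.
Proof. by case: hH => _ [_ ->]. Qed.
Lemma epslD a : epsl H (D a) = a.
Proof. by case: hH => _ _ /(_ a) []. Qed.
Lemma epsrD a : epsr H (D a) = a.
Proof. by case: hH => _ _ /(_ a) []. Qed.
Lemma Dmul a b : D (m a b) = mul2 (D a) (D b).
Proof. by case: hH => _ _ _ []. Qed.
Lemma Done : D one = tens one one.
Proof. by case: hH => _ _ _ []. Qed.
Lemma eps_mul a b : eps (m a b) = eps a * eps b.
Proof. by case: hH => _ _ _ []. Qed.
Lemma eps_one : eps one = 1.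
Proof. by case: hH => _ _ _ []. Qed.
Lemma antiL a : mS_l H (D a) = eps a *: one.
Proof. by case: hH => _ _ _ _ /(_ a) []. Qed.
Lemma antiR a : mS_r H (D a) = eps a *: one.
Proof. by case: hH => _ _ _ _ /(_ a) []. Qed.

Lemma mul2_assoc X Y Z : mul2 (mul2 X Y) Z = mul2 X (mul2 Y Z).
Proof.
move: X; apply: lin_eqM.
- exact: (islin_comp (mul2_lin_l H Y) (mul2_lin_l H Z)).
- exact: (mul2_lin_l H _).
move=> a b; move: Y; apply: lin_eqM.
- exact: (islin_comp (mul2_lin_r H _) (mul2_lin_l H Z)).
- exact: (islin_comp (mul2_lin_l H Z) (mul2_lin_r H _)).
move=> c d; move: Z; apply: lin_eqM.
- exact: (mul2_lin_r H _).
- exact: (islin_comp (mul2_lin_r H _) (mul2_lin_r H _)).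
by move=> x y; rewrite !M1 !massoc.
Qed.

Lemma mul2_1r X : mul2 X (tens one one) = X.
Proof.
move: X; apply: (lin_eqM (mul2_lin_l H _)) => [k a b //|a b].
by rewrite M1 !ma1.
Qed.

Lemma mul2_1l X : mul2 (tens one one) X = X.
Proof.
move: X; apply: (lin_eqM (mul2_lin_r H _)) => [k a b //|a b].
by rewrite M1 !m1a.
Qed.

Lemma Dcoef a j k : D a j k = \sum_i a 0 i * hcomul H i j k.
Proof. by rewrite /comulA summxE; apply: eq_bigr => i _; rewrite mxE. Qed.

Lemma CA a p q s :
  \sum_r D a r s * D (e r) p q = \sum_r D a p r * D (e r) q s.
Proof.
under eq_bigr do rewrite Dcoef D_e mulr_suml.
under [RHS]eq_bigr do rewrite Dcoef D_e mulr_suml.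
rewrite exchange_big [RHS]exchange_big; apply: eq_bigr => i _.
under eq_bigr do rewrite -mulrA.
under [RHS]eq_bigr do rewrite -mulrA.
by rewrite -!mulr_sumr coass.
Qed.

Lemma epsrE X p : (epsr H X) 0 p = \sum_q X p q * hcounit H q.
Proof.
rewrite /epsr; under eq_bigr do rewrite -scaler_suml.
by rewrite coord_sum.
Qed.

Lemma epslE X q : (epsl H X) 0 q = \sum_p hcounit H p * X p q.
Proof.
rewrite /epsl exchange_big /=; under eq_bigr do rewrite -scaler_suml.
by rewrite coord_sum.
Qed.

Lemma a_epsr a p : a 0 p = \sum_q D a p q * hcounit H q.
Proof. by rewrite -epsrE epsrD. Qed.
Lemma a_epsl a q : a 0 q = \sum_p hcounit H p * D a p q.
Proof. by rewrite -epslE epslD. Qed.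

Lemma S_coord a : S a = \sum_i a 0 i *: S (e i).
Proof. by under [RHS]eq_bigr do rewrite S_e. Qed.

Lemma mSl_lin : islin (mS_l H).
Proof. exact: coefM_lin. Qed.
Lemma mSr_lin : islin (mS_r H).
Proof. exact: coefM_lin. Qed.

Lemma mSl_tens x y : mS_l H (tens x y) = m (S x) y.
Proof.
rewrite (S_coord x) m_suml; apply: eq_bigr => j _.
rewrite m_Zl (lin_coord (m_lin_r H _) y) scaler_sumr; apply: eq_bigr => k _.
by rewrite tensE scalerA.
Qed.

Lemma mSr_tens x y : mS_r H (tens x y) = m x (S y).
Proof.
rewrite (S_coord y) (lin_coord (m_lin_l H _) x); apply: eq_bigr => j _.
rewrite m_sumr scaler_sumr; apply: eq_bigr => k _.
by rewrite tensE m_Zr scalerA.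
Qed.

End Hop3.
Section Hop4.
Variables (K : fieldType) (n : nat) (H : hopf_data K n).
Implicit Types (a b c d x y : 'rV[K]_n) (X Y Z : 'M[K]_(n, n)).
Local Notation e := (@bvec K n).
Local Notation D := (comulA H).
Local Notation S := (antiA H).
Local Notation eps := (counitA H).
Local Notation m := (Defs.mulA H).
Local Notation one := (oneA H).
Local Notation mul2 := (mul2 H).
Hypothesis hH : is_hopf H.

Lemma coassoc_sum (W : lmodType K) a (G : 'I_n -> 'I_n -> 'I_n -> W) :
  \sum_p \sum_q \sum_r \sum_s (D a p q * D (e p) r s) *: G r s q =
  \sum_r \sum_m \sum_s \sum_q (D a r m * D (e m) s q) *: G r s q.
Proof.
transitivity (\sum_r \sum_s \sum_q \sum_p (D a p q * D (e p) r s) *: G r s q).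
  rewrite exchange_big; under eq_bigr do rewrite exchange_big.
  under eq_bigr do under eq_bigr do rewrite exchange_big.
  rewrite exchange_big; by under eq_bigr do rewrite exchange_big.
transitivity (\sum_r \sum_s \sum_q \sum_m (D a r m * D (e m) s q) *: G r s q).
  apply: eq_bigr => r _; apply: eq_bigr => s _; apply: eq_bigr => q _.
  by rewrite -!scaler_suml (CA hH).
apply: eq_bigr => r _; rewrite [RHS]exchange_big; apply: eq_bigr => s _.
by rewrite exchange_big.
Qed.

Definition conv (f g : 'rV[K]_n -> 'M[K]_(n, n)) a :=
  \sum_p \sum_q D a p q *: mul2 (f (e p)) (g (e q)).
Definition uc a := eps a *: tens one one.

Lemma conv_ur f : islin f -> forall a, conv f uc a = f a.
Proof.
move=> hf a; rewrite (lin_coord hf a) /conv; apply: eq_bigr => p _.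
under eq_bigr do rewrite /uc mul2_Zr (mul2_1r hH) scalerA eps_e.
by rewrite -scaler_suml -(a_epsr hH).
Qed.

Lemma conv_ul g : islin g -> forall a, conv uc g a = g a.
Proof.
move=> hg a; rewrite (lin_coord hg a) /conv exchange_big; apply: eq_bigr => q _.
under eq_bigr do rewrite /uc mul2_Zl (mul2_1l hH) eps_e scalerA mulrC.
by rewrite -scaler_suml -(a_epsl hH).
Qed.

Lemma conv_ext f f' g g' a : (forall i, f (e i) = f' (e i)) ->
  (forall i, g (e i) = g' (e i)) -> conv f g a = conv f' g' a.
Proof.
move=> hf hg; apply: eq_bigr => p _; apply: eq_bigr => q _; by rewrite hf hg.
Qed.

Lemma conv_assoc f g h a : conv (conv f g) h a = conv f (conv g h) a.
Proof.
rewrite /conv.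
transitivity (\sum_p \sum_q \sum_r \sum_s (D a p q * D (e p) r s) *:
   mul2 (mul2 (f (e r)) (g (e s))) (h (e q))).
  apply: eq_bigr => p _; apply: eq_bigr => q _.
  rewrite mul2_suml scaler_sumr; apply: eq_bigr => r _.
  rewrite mul2_suml scaler_sumr; apply: eq_bigr => s _.
  by rewrite mul2_Zl scalerA.
rewrite coassoc_sum; apply: eq_bigr => r _; apply: eq_bigr => k _.
rewrite mul2_sumr scaler_sumr; apply: eq_bigr => s _.
rewrite mul2_sumr scaler_sumr; apply: eq_bigr => q _.
by rewrite mul2_Zr scalerA (mul2_assoc hH).
Qed.

Definition Lmap a := \sum_p \sum_q D a p q *: tens (S (e q)) (S (e p)).
Definition Rmap a := D (S a).

Lemma Lmap_lin : islin Lmap.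
Proof. exact: (islin_comp (D_lin H) (coefM_lin _)). Qed.
Lemma Rmap_lin : islin Rmap.
Proof. exact: (islin_comp (S_lin H) (D_lin H)). Qed.
Lemma uc_lin : islin uc.
Proof. by move=> k a b; rewrite /uc eps_lin scalerDl scalerA. Qed.

Lemma conv_DR a : conv D Rmap a = uc a.
Proof.
rewrite /conv /Rmap.
under eq_bigr do under eq_bigr do rewrite -(Dmul hH) -D_Z.
under eq_bigr do rewrite -D_sum.
rewrite -D_sum; change (D (mS_r H (D a)) = uc a).
by rewrite (antiR hH) D_Z (Done hH).
Qed.

Lemma conv_LD a : conv Lmap D a = uc a.
Proof.
rewrite /conv /Lmap.
transitivity (\sum_r \sum_s \sum_p \sum_q (D a r s * D (e r) p q) *:
   mul2 (tens (S (e q)) (S (e p))) (D (e s))).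
  apply: eq_bigr => r _; apply: eq_bigr => s _.
  rewrite mul2_suml scaler_sumr; apply: eq_bigr => p _.
  rewrite mul2_suml scaler_sumr; apply: eq_bigr => q _.
  by rewrite mul2_Zl scalerA.
rewrite (@coassoc_sum _ a (fun p q s => mul2 (tens (S (e q)) (S (e p))) (D (e s)))) /=.
transitivity (\sum_p \sum_k D a p k *: tens one (m (S (e p)) (e k))); last first.
  rewrite /uc -tens_Zr -(antiL hH) /mS_l tens_sumr; apply: eq_bigr => p _.
  by rewrite tens_sumr; apply: eq_bigr => k _; rewrite tens_Zr.
apply: eq_bigr => p _; apply: eq_bigr => k _.
under eq_bigr do under eq_bigr do rewrite -scalerA.
under eq_bigr do rewrite -scaler_sumr.
rewrite -scaler_sumr; congr (_ *: _).
transitivity (\sum_q \sum_s \sum_t \sum_u (D (e k) q s * D (e s) t u) *: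
   tens (m (S (e q)) (e t)) (m (S (e p)) (e u))).
  apply: eq_bigr => q _; apply: eq_bigr => s _.
  rewrite {1}(mat_decomp (D (e s))) mul2_sumr scaler_sumr; apply: eq_bigr => t _.
  rewrite mul2_sumr scaler_sumr; apply: eq_bigr => u _.
  by rewrite mul2_Zr (M1 H) scalerA.
rewrite -(@coassoc_sum _ (e k) (fun q t u => tens (m (S (e q)) (e t)) (m (S (e p)) (e u)))) /=.
transitivity (\sum_w \sum_u (D (e k) w u * hcounit H w) *: tens one (m (S (e p)) (e u))).
  apply: eq_bigr => w _; apply: eq_bigr => u _.
  under eq_bigr do under eq_bigr do rewrite -scalerA.
  under eq_bigr do rewrite -scaler_sumr.
  rewrite -scaler_sumr -scalerA; congr (_ *: _).
  rewrite -eps_e -tens_Zl -(antiL hH) /mS_l tens_suml; apply: eq_bigr => q _.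
  by rewrite tens_suml; apply: eq_bigr => t _; rewrite tens_Zl.
rewrite exchange_big /=.
under eq_bigr do rewrite -scaler_suml.
under eq_bigr do under eq_bigr do rewrite mulrC.
under eq_bigr do rewrite -(a_epsl hH).
exact: (sum_bvec k (fun u => tens one (m (S (e p)) (e u)))).
Qed.

Lemma AC a : D (S a) = Lmap a.
Proof.
rewrite -(conv_ur Lmap_lin a); symmetry.
transitivity (conv Lmap (conv D Rmap) a).
  by apply: conv_ext => // i; rewrite conv_DR.
rewrite -conv_assoc.
transitivity (conv uc Rmap a).
  by apply: conv_ext => // i; rewrite conv_LD.
exact: (conv_ul Rmap_lin a).
Qed.

End Hop4.
Section Rep.
Variables (K : fieldType) (n : nat) (H : hopf_data K n).
Implicit Types (a b c d x y : 'rV[K]_n) (X Y Z : 'M[K]_(n, n)).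
Local Notation e := (@bvec K n).
Local Notation D := (comulA H).
Local Notation S := (antiA H).
Local Notation eps := (counitA H).
Local Notation m := (Defs.mulA H).
Local Notation one := (oneA H).
Local Notation mul2 := (mul2 H).
Hypothesis hH : is_hopf H.
Hypothesis hS2 : forall a, S (S a) = a.

Lemma eps_S a : eps (S a) = eps a.
Proof.
have := congr1 eps (antiL hH a); rewrite eps_Z (eps_one hH) mulr1 /mS_l eps_sum => <-.
rewrite (S_coord H a) eps_sum; apply: eq_bigr => j _.
rewrite eps_sum eps_Z (a_epsr hH a j) mulr_suml; apply: eq_bigr => k _.
by rewrite eps_Z (eps_mul hH) eps_e mulrAC -mulrA.
Qed.

Lemma SP a : \sum_j \sum_k D a j k *: m (S (e k)) (e j) = eps a *: one.
Proof.
rewrite -(eps_S a) -(antiR hH) (AC hH) /Lmap (linS (mSr_lin H)).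
apply: eq_bigr => j _; rewrite (linS (mSr_lin H)); apply: eq_bigr => k _.
by rewrite (linZ (mSr_lin H)) (mSr_tens H) hS2.
Qed.

Lemma ACE a j k : D (S a) j k =
  \sum_p \sum_q D a p q * ((S (e q)) 0 j * (S (e p)) 0 k).
Proof.
rewrite (AC hH) /Lmap summxE; apply: eq_bigr => p _.
rewrite summxE; apply: eq_bigr => q _; by rewrite mxE tensE.
Qed.

Variables (V : lmodType K) (Pi : 'rV[K]_n -> V -> V) (phi : V).
Hypothesis hPi : is_rep H Pi.

Lemma Pi_linv a : islin (Pi a).
Proof. by case: hPi => h _ _ _ k u v; rewrite h. Qed.
Lemma Pi_lina v : islin (fun a => Pi a v).
Proof. by case: hPi => _ h _ _ k u w; rewrite h. Qed.
Lemma Pi_mul a b v : Pi (m a b) v = Pi a (Pi b v).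
Proof. by case: hPi. Qed.
Lemma Pi_one v : Pi one v = v.
Proof. by case: hPi. Qed.
Lemma Pi_suml I r (P : pred I) (F : I -> _) v :
  Pi (\sum_(i <- r | P i) F i) v = \sum_(i <- r | P i) Pi (F i) v.
Proof. exact: (linS (Pi_lina v)). Qed.
Lemma Pi_sumr I r (P : pred I) (F : I -> V) a :
  Pi a (\sum_(i <- r | P i) F i) = \sum_(i <- r | P i) Pi a (F i).
Proof. exact: (linS (Pi_linv a)). Qed.
Lemma Pi_Zl k a v : Pi (k *: a) v = k *: Pi a v.
Proof. exact: (linZ (Pi_lina v)). Qed.
Lemma Pi_Zr k a v : Pi a (k *: v) = k *: Pi a v.
Proof. exact: (linZ (Pi_linv a)). Qed.
Lemma Pi_coord a v : Pi a v = \sum_i a 0 i *: Pi (e i) v.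
Proof. exact: (lin_coord (Pi_lina v)). Qed.

Definition ract X j := \sum_k X j k *: Pi (e k) phi.
Definition lact X k := \sum_j X j k *: Pi (e j) phi.

Lemma ract_lin j : islin (fun X => ract X j).
Proof.
move=> k X Y; rewrite /ract scaler_sumr -big_split; apply: eq_bigr => i _.
by rewrite !mxE scalerDl scalerA.
Qed.
Lemma lact_lin k : islin (fun X => lact X k).
Proof.
move=> c X Y; rewrite /lact scaler_sumr -big_split; apply: eq_bigr => i _.
by rewrite !mxE scalerDl scalerA.
Qed.
Lemma ract_tens x y j : ract (tens x y) j = x 0 j *: Pi y phi.
Proof.
rewrite /ract (Pi_coord y) scaler_sumr; apply: eq_bigr => k _.
by rewrite tensE scalerA.
Qed.
Lemma lact_tens x y k : lact (tens x y) k = y 0 k *: Pi x phi.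
Proof.
rewrite /lact (Pi_coord x) scaler_sumr; apply: eq_bigr => j _.
by rewrite tensE scalerA mulrC.
Qed.

Lemma TrE a : T_r H Pi phi a <-> forall j, ract (D a) j = a 0 j *: phi.
Proof. by []. Qed.
Lemma TlE a : T_l H Pi phi a <-> forall k, lact (D a) k = a 0 k *: phi.
Proof. by []. Qed.

Definition rowv X p : 'rV[K]_n := \row_q X p q.
Definition colv X q : 'rV[K]_n := \row_p X p q.

Lemma Tr_sub : subspace (T_r H Pi phi).
Proof.
split.
  move=> j; rewrite (lin0 (D_lin H)) mxE scale0r big1 // => k _.
  by rewrite mxE scale0r.
move=> k a b ha hb j; rewrite (D_lin H).
have := ract_lin j k (D a) (D b); rewrite /ract => ->.
by rewrite ha hb !mxE scalerDl scalerA.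
Qed.

Lemma Tl_sub : subspace (T_l H Pi phi).
Proof.
split.
  move=> j; rewrite (lin0 (D_lin H)) mxE scale0r big1 // => k _.
  by rewrite mxE scale0r.
move=> k a b ha hb j; rewrite (D_lin H).
have := lact_lin j k (D a) (D b); rewrite /lact => ->.
by rewrite ha hb !mxE scalerDl scalerA.
Qed.

Lemma Tr_fix a : T_r H Pi phi a -> Pi a phi = eps a *: phi.
Proof.
move=> ha; rewrite (Pi_coord a).
under eq_bigr => k _ do rewrite (a_epsl hH a k) scaler_suml.
rewrite exchange_big /=.
under eq_bigr => p _ do (under eq_bigr do rewrite -scalerA; rewrite -scaler_sumr ha).
rewrite /counitA scaler_suml; apply: eq_bigr => p _.
by rewrite scalerA mulrC.
Qed.

Lemma Tr_coid a p : T_r H Pi phi a -> T_r H Pi phi (rowv (D a) p).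
Proof.
move=> ha j.
have E k : D (rowv (D a) p) j k = \sum_r D a r k * D (e r) p j.
  rewrite Dcoef; under eq_bigr do rewrite mxE -(D_e H).
  by rewrite -(CA hH a p j k).
under eq_bigr do rewrite E scaler_suml.
rewrite exchange_big /=.
under eq_bigr => r _ do (under eq_bigr do rewrite mulrC -scalerA; rewrite -scaler_sumr ha).
rewrite mxE Dcoef scaler_suml; apply: eq_bigr => r _.
by rewrite scalerA D_e mulrC.
Qed.

Lemma Tl_coid a q : T_l H Pi phi a -> T_l H Pi phi (colv (D a) q).
Proof.
move=> ha k.
have E j : D (colv (D a) q) j k = \sum_r D a j r * D (e r) k q.
  rewrite Dcoef; under eq_bigr do rewrite mxE -(D_e H).
  by rewrite (CA hH a j k q).
under eq_bigr do rewrite E scaler_suml.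
rewrite exchange_big /=.
under eq_bigr => r _ do (under eq_bigr do rewrite mulrC -scalerA; rewrite -scaler_sumr ha).
rewrite mxE Dcoef scaler_suml; apply: eq_bigr => r _.
by rewrite scalerA D_e mulrC.
Qed.

Lemma Tr_Sfix a : T_r H Pi phi a -> Pi (S a) phi = eps a *: phi.
Proof.
move=> ha.
have := congr1 (fun b => Pi b phi) (antiL hH a).
rewrite /= Pi_Zl Pi_one /mS_l Pi_suml => <-.
rewrite (S_coord H a) Pi_suml; apply: eq_bigr => j _.
rewrite Pi_Zl [RHS]Pi_suml.
under [RHS]eq_bigr do rewrite Pi_Zl Pi_mul -Pi_Zr.
by rewrite -Pi_sumr (ha j) Pi_Zr.
Qed.

Lemma Tl_Sfix a : T_l H Pi phi a -> Pi (S a) phi = eps a *: phi.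
Proof.
move=> ha.
have := congr1 (fun b => Pi b phi) (SP a).
rewrite /= Pi_Zl Pi_one Pi_suml => <-.
under [RHS]eq_bigr do rewrite Pi_suml.
rewrite [RHS]exchange_big /=.
rewrite (S_coord H a) Pi_suml; apply: eq_bigr => k _.
under [RHS]eq_bigr do rewrite Pi_Zl Pi_mul -Pi_Zr.
by rewrite -Pi_sumr (ha k) Pi_Zr Pi_Zl.
Qed.
Lemma STr a : T_r H Pi phi a -> T_l H Pi phi (S a).
Proof.
move=> ha k.
under eq_bigr do rewrite ACE scaler_suml.
under eq_bigr do under eq_bigr do rewrite scaler_suml.
rewrite exchange_big /=; under eq_bigr do rewrite exchange_big /=.
transitivity (\sum_p (S (e p)) 0 k *: Pi (S (rowv (D a) p)) phi).
  apply: eq_bigr => p _.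
  rewrite (S_coord H (rowv _ _)) Pi_suml scaler_sumr; apply: eq_bigr => q _.
  rewrite mxE Pi_Zl (Pi_coord (S (e q))) !scaler_sumr; apply: eq_bigr => j _.
  by rewrite !scalerA; congr (_ *: _); ring.
under eq_bigr => p _ do rewrite (Tr_Sfix (Tr_coid p ha)) scalerA.
rewrite (S_coord H a) summxE scaler_suml; apply: eq_bigr => p _.
rewrite /counitA; under eq_bigr do rewrite mxE.
by rewrite -(a_epsr hH) !mxE mulrC.
Qed.

Lemma STl a : T_l H Pi phi a -> T_r H Pi phi (S a).
Proof.
move=> ha j.
under eq_bigr do rewrite ACE scaler_suml.
under eq_bigr do under eq_bigr do rewrite scaler_suml.
rewrite exchange_big /=; under eq_bigr do rewrite exchange_big /=.
rewrite exchange_big /=.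
transitivity (\sum_q (S (e q)) 0 j *: Pi (S (colv (D a) q)) phi).
  apply: eq_bigr => q _.
  rewrite (S_coord H (colv _ _)) Pi_suml scaler_sumr; apply: eq_bigr => p _.
  rewrite mxE Pi_Zl (Pi_coord (S (e p))) !scaler_sumr; apply: eq_bigr => k _.
  by rewrite !scalerA; congr (_ *: _); ring.
under eq_bigr => q _ do rewrite (Tl_Sfix (Tl_coid q ha)) scalerA.
rewrite (S_coord H a) summxE scaler_suml; apply: eq_bigr => q _.
rewrite /counitA; under eq_bigr do rewrite mxE.
under eq_bigr do rewrite mulrC.
by rewrite -(a_epsl hH) !mxE mulrC.
Qed.
Lemma Tr_one : T_r H Pi phi one.
Proof.
move=> j; rewrite -/(ract (D one) j) (Done hH) ract_tens Pi_one //.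
Qed.

Lemma Tr_mul a b : T_r H Pi phi a -> T_r H Pi phi b -> T_r H Pi phi (m a b).
Proof.
move=> ha hb j; rewrite -/(ract (D (m a b)) j) (Dmul hH).
have step p q : ract (mul2 (tens (e p) (e q)) (D b)) j =
    \sum_r ((m (e p) (e r)) 0 j * b 0 r) *: Pi (e q) phi.
  rewrite {1}(mat_decomp (D b)) mul2_sumr (linS (ract_lin j)); apply: eq_bigr => r _.
  rewrite mul2_sumr (linS (ract_lin j)).
  under eq_bigr do rewrite mul2_Zr (M1 H) (linZ (ract_lin j)) ract_tens Pi_mul.
  rewrite -scalerA -Pi_Zr -(hb r) Pi_sumr scaler_sumr; apply: eq_bigr => s _.
  by rewrite Pi_Zr !scalerA mulrC.
rewrite {1}(mat_decomp (D a)) mul2_suml (linS (ract_lin j)).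
under eq_bigr do rewrite mul2_suml (linS (ract_lin j)).
under eq_bigr do under eq_bigr do rewrite mul2_Zl (linZ (ract_lin j)) step.
rewrite (m_coord H a b) summxE scaler_suml; apply: eq_bigr => p _.
under eq_bigr do rewrite scaler_sumr.
rewrite exchange_big /=.
under eq_bigr do (under eq_bigr do rewrite scalerA mulrC -scalerA; rewrite -scaler_sumr (ha p)).
rewrite summxE scaler_suml; apply: eq_bigr => r _.
by rewrite !mxE scalerA; congr (_ *: _); ring.
Qed.

Lemma fix_Tr (B : 'rV[K]_n -> Prop) a :
  (forall b, B b -> fixes H Pi phi b) -> in_tensor2 B (D a) -> T_r H Pi phi a.
Proof.
move=> hB [k [us [vs [hu hv E]]]] j.
rewrite -/(ract (D a) j) (a_epsr hH a j) E (linS (ract_lin j)).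
under eq_bigr do rewrite ract_tens (hB _ (hv _)) scalerA.
rewrite -scaler_suml; congr (_ *: _).
under [RHS]eq_bigr do rewrite summxE mulr_suml.
rewrite [RHS]exchange_big /=; apply: eq_bigr => i _.
rewrite /counitA mulr_sumr; apply: eq_bigr => q _.
by rewrite tensE mulrA.
Qed.

End Rep.
Section Tens.
Variables (K : fieldType) (n : nat).

Lemma basis_ex (C : 'rV[K]_n -> Prop) : subspace C ->
  exists M : 'M[K]_n, forall v, C v <-> (v <= M)%MS.
Proof.
move=> [C0 CL].
suff: forall d (M : 'M[K]_n), (n - \rank M <= d)%N ->
    (forall v, (v <= M)%MS -> C v) -> exists M' : 'M[K]_n, forall v, C v <-> (v <= M')%MS.
  move=> /(_ n 0); apply; first by rewrite mxrank0 subn0.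
  by move=> v; rewrite submx0 => /eqP ->.
elim=> [|d IH] M hd hM.
  exists M => v; split=> [Cv|]; last exact: hM.
  apply/negPn/negP => nv.
  have hlt : (M < M + v)%MS by rewrite ltmxE addsmxSl /=; apply: contra nv => h; apply: submx_trans h; exact: addsmxSr.
  have := rank_ltmx hlt; have := rank_leq_col (M + v)%MS.
  move: hd; rewrite leqn0 subn_eq0 => h1 h2 h3.
  by have := leq_trans h3 (leq_trans h2 h1); rewrite ltnn.
case: (classic (forall v, C v -> (v <= M)%MS)) => [hall|].
  by exists M => v; split; [exact: hall| exact: hM].
move=> /not_all_ex_not [v hv]; have [Cv nv] := imply_to_and _ _ hv.
have nv' : ~~ (v <= M)%MS by apply/negP.
have hlt : (M < M + v)%MS by rewrite ltmxE addsmxSl /=; apply: contra nv' => h; apply: submx_trans h; exact: addsmxSr.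
apply: (IH (M + v)%MS).
  have := rank_ltmx hlt; have := rank_leq_col (M + v)%MS; move: hd.
  move=> h1 h2 h3. 
  rewrite leq_subLR; rewrite leq_subLR in h1.
  by apply: (leq_trans h1); rewrite addnS -addSn leq_add2r.
move=> u /sub_addsmxP [[w1 w2] /= ->].
rewrite [w2]mx11_scalar mul_scalar_mx addrC -[w2 0 0 *: v + _]/(w2 0 0 *: v + w1 *m M).
by apply: CL => //; apply: hM; exact: submxMl.
Qed.

Lemma tensor2_ok (C : 'rV[K]_n -> Prop) (X : 'M[K]_(n, n)) : subspace C ->
  (forall p, C (rowv X p)) -> (forall q, C (colv X q)) -> in_tensor2 C X.
Proof.
move=> sC hr hc; have [M hM] := basis_ex sC.
pose P := pinvmx M *m M.
have PC v : C (v *m P) by apply/hM; rewrite /P mulmxA; exact: submxMl.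
have Pid v : C v -> v *m P = v by move=> /hM hv; rewrite /P mulmxA mulmxKpV.
exists n, (fun k => colv X k), (fun k => row k P); split => //.
  by move=> k; rewrite rowE; exact: PC.
have XP : X = X *m P.
  apply/row_matrixP => i; rewrite row_mul.
  have -> : row i X = rowv X i by apply/rowP => j; rewrite !mxE.
  by rewrite Pid.
rewrite {1}XP; apply/matrixP => i j; rewrite mxE summxE; apply: eq_bigr => k _.
by rewrite tensE !mxE.
Qed.

End Tens.
Theorem main_gen (K : fieldType) (n : nat) (H : hopf_data K n)
  (hH : is_hopf H) (hS2 : forall a, antiA H (antiA H a) = a)
  (V : lmodType K) (Pi : 'rV[K]_n -> V -> V) (hPi : is_rep H Pi)
  (phi : V) (T : 'rV[K]_n -> Prop)
  (hT : largest_fixing_hopf_subalg H Pi phi T) :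
  [<-> (forall a, T_r H Pi phi a <-> T_l H Pi phi a);
       hopf_subalg H (T_r H Pi phi);
       (forall a, T_r H Pi phi a <-> T a);
       (forall a, T_l H Pi phi a -> T_r H Pi phi a)].
Proof.
have [hTh hTfix hTmax] := hT.
have [_ _ _ hTD hTS] := hTh.
tfae=> [h1 | h2 | h3 | h4].
- split.
  + exact: Tr_sub.
  + exact: (Tr_one hH _ hPi).
  + by move=> a b; apply: (Tr_mul hH hPi).
  + move=> a ha; apply: tensor2_ok; first exact: Tr_sub.
      by move=> p; apply: (Tr_coid hH).
    by move=> q; apply/h1; apply: (Tl_coid hH); apply/h1.
  + by move=> a ha; apply/h1; apply: (STr hH hPi).
- move=> a; split.
    by apply: hTmax h2 _ a => b hb; apply: (Tr_fix hH hPi).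
  by move=> ha; apply: (fix_Tr hH hPi hTfix); apply: hTD.
- move=> a ha.
  have := STl hH hS2 hPi ha => /h3 /hTS; rewrite hS2 => /h3; done.
- move=> a; split; last exact: h4.
  move=> ha; have := STr hH hPi ha => /h4 hS.
  by have := STr hH hPi hS; rewrite hS2.
Qed.

Unset Implicit Arguments.
Local Open Scope complex_scope.

Theorem proposition1 (R : realType) (n : nat) (H : hopf_data R[i] n)
  (hH : is_hopf H) (hS2 : forall a, antiA H (antiA H a) = a)
  (V : lmodType R[i]) (Pi : 'rV[R[i]]_n -> V -> V) (hPi : is_rep H Pi)
  (phi : V) (T : 'rV[R[i]]_n -> Prop)
  (hT : largest_fixing_hopf_subalg H Pi phi T) :
  [<-> (forall a, T_r H Pi phi a <-> T_l H Pi phi a);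
       hopf_subalg H (T_r H Pi phi);
       (forall a, T_r H Pi phi a <-> T a);
       (forall a, T_l H Pi phi a -> T_r H Pi phi a)].
Proof. exact: (main_gen hH hS2 hPi hT). Qed.
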